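(* Let $q'>0$, $e'=0$, $q_{\max}>0$, $\mathcal D''_3=\{\omega:0\le\omega\le\pi/2\}$, $\mathcal D_4=\{(q,e):0<q\le q_{\max},\ 0\le e\le1\}$. For each $(q,e)\in\mathcal D_4$, $$\min_{\omega\in\mathcal D''_3}\delta_{\rm nod}=\max\{0,\ q'-Q,\ q-q'\},\qquad \max_{\omega\in\mathcal D''_3}\delta_{\rm nod}=\max\big\{\min\{q'-q,\ Q-q'\},\ |q'-q(1+e)|\big\},$$ where $Q=\frac{q(1+e)}{1-e}$ (possibly $+\infty$).
   Context: Here the trajectory $\mathcal A'$ is a circle of radius $q'$ ($e'=0$), so $r'_+=r'_-=q'$. For $q>0$, $e\in[0,1]$, $\omega$ an angle, define $r_{\pm}=\frac{q(1+e)}{1\pm e\cos\omega}$ (extended-real value $+\infty$ when the denominator vanishes), $d^\pm=q'-r_\pm$, and the nodal distance $\delta_{\rm nod}(q,e,\omega)=\min\{|d^+|,|d^-|\}$. *)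

(* Defs.v *)
From Stdlib Require Import Reals Lra.
Open Scope R_scope.

Inductive ER : Type := Fin (x : R) | PInf | NInf.

Definition ER_le (a b : ER) : Prop :=
  match a, b with
  | Fin x, Fin y => x <= y
  | NInf, _ => True
  | _, PInf => True
  | _, _ => False
  end.

Definition ER_min (a b : ER) : ER :=
  match a, b with
  | Fin x, Fin y => Fin (Rmin x y)
  | NInf, _ => NInf
  | _, NInf => NInf
  | PInf, b => b
  | a, PInf => a
  end.

Definition ER_max (a b : ER) : ER :=
  match a, b with
  | Fin x, Fin y => Fin (Rmax x y)
  | PInf, _ => PInf
  | _, PInf => PInf
  | NInf, b => b
  | a, NInf => a
  end.

Definition ER_abs (a : ER) : ER :=
  match a with Fin x => Fin (Rabs x) | _ => PInf end.

Definition ER_sub_RE (x : R) (y : ER) : ER :=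
  match y with Fin z => Fin (x - z) | PInf => NInf | NInf => PInf end.

Definition ER_sub_ER (y : ER) (x : R) : ER :=
  match y with Fin z => Fin (z - x) | PInf => PInf | NInf => NInf end.

(* num / den, with value +infinity when the denominator vanishes
   (in our uses the numerator q(1+e) is positive). *)
Definition rdiv_ext (num den : R) : ER :=
  if Req_EM_T den 0 then PInf else Fin (num / den).

Definition r_plus (q e w : R) : ER := rdiv_ext (q * (1 + e)) (1 + e * cos w).
Definition r_minus (q e w : R) : ER := rdiv_ext (q * (1 + e)) (1 - e * cos w).

(* nodal distance to the circle of radius q' *)
Definition delta_nod (q' q e w : R) : ER :=
  ER_min (ER_abs (ER_sub_RE q' (r_plus q e w)))
         (ER_abs (ER_sub_RE q' (r_minus q e w))).

Definition Qapo (q e : R) : ER := rdiv_ext (q * (1 + e)) (1 - e).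

Definition is_min_on (P : R -> Prop) (f : R -> ER) (m : ER) : Prop :=
  (exists w, P w /\ f w = m) /\ (forall w, P w -> ER_le m (f w)).

Definition is_max_on (P : R -> Prop) (f : R -> ER) (m : ER) : Prop :=
  (exists w, P w /\ f w = m) /\ (forall w, P w -> ER_le (f w) m).

(* Main.v *)
Require Import Defs.
From Stdlib Require Import Reals Lra Psatz.
Open Scope R_scope.

Lemma ex_w (c : R) : 0 <= c <= 1 -> exists w, 0 <= w <= PI / 2 /\ cos w = c.
Proof.
  intros Hc. exists (acos c). pose proof (acos_bound c). pose proof PI_RGT_0.
  assert (cos (acos c) = c) by (apply cos_acos; lra).
  split; [|assumption]. split; [lra|].
  destruct (Rle_dec (acos c) (PI/2)) as [h|h]; [exact h|].
  exfalso. assert (cos (acos c) < 0) by (apply cos_lt_0; lra). lra.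
Qed.

Lemma cos_dom (w : R) : 0 <= w <= PI / 2 -> 0 <= cos w <= 1.
Proof.
  intros H. pose proof PI_RGT_0. pose proof (COS_bound w).
  split; [apply cos_ge_0; lra | lra].
Qed.

Lemma delta_lt1 q' q e w : 0 <= e * cos w < 1 ->
  delta_nod q' q e w =
  Fin (Rmin (Rabs (q' - q * (1 + e) / (1 + e * cos w)))
            (Rabs (q' - q * (1 + e) / (1 - e * cos w)))).
Proof.
  intros H. unfold delta_nod, r_plus, r_minus, Defs.rdiv_ext.
  destruct (Req_EM_T (1 + e * cos w) 0); [lra|].
  destruct (Req_EM_T (1 - e * cos w) 0); [lra|]. reflexivity.
Qed.

Lemma delta_eq1 q' q e w : e = 1 -> cos w = 1 ->
  delta_nod q' q e w = Fin (Rabs (q' - q)).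
Proof.
  intros He Hc. unfold delta_nod, r_plus, r_minus, Defs.rdiv_ext.
  rewrite He, Hc.
  destruct (Req_EM_T (1 + 1 * 1) 0); [lra|].
  destruct (Req_EM_T (1 - 1 * 1) 0); [|lra]. simpl.
  replace (q * (1 + 1) / (1 + 1 * 1)) with q by field. reflexivity.
Qed.

Lemma Qapo_lt1 q e : e < 1 -> Qapo q e = Fin (q * (1 + e) / (1 - e)).
Proof. intros H. unfold Qapo, Defs.rdiv_ext. destruct (Req_EM_T (1 - e) 0); [lra|]. reflexivity. Qed.

Lemma Qapo_eq1 q e : e = 1 -> Qapo q e = PInf.
Proof. intros H. unfold Qapo, Defs.rdiv_ext. destruct (Req_EM_T (1 - e) 0); [reflexivity|lra]. Qed.

Lemma xbounds q e t : 0 < q -> 0 <= t <= e -> e <= 1 ->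
  q <= q * (1 + e) / (1 + t) <= q * (1 + e).
Proof.
  intros Hq Ht He. set (x := q * (1 + e) / (1 + t)).
  assert (H1 : x - q = q * (e - t) / (1 + t)) by (unfold x; field; lra).
  assert (H2 : q * (1 + e) - x = q * (1 + e) * t / (1 + t)) by (unfold x; field; lra).
  assert (0 <= q * (e - t) / (1 + t)) by (apply Rle_mult_inv_pos; [repeat apply Rmult_le_pos; lra | try apply Rmult_lt_0_compat; lra]).
  assert (0 <= q * (1 + e) * t / (1 + t)) by (apply Rle_mult_inv_pos; [repeat apply Rmult_le_pos; lra | try apply Rmult_lt_0_compat; lra]).
  lra.
Qed.

Lemma ybounds q e t : 0 < q -> 0 <= t <= e -> t < 1 ->
  q * (1 + e) <= q * (1 + e) / (1 - t).
Proof.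
  intros Hq Ht He. set (y := q * (1 + e) / (1 - t)).
  assert (H1 : y - q * (1 + e) = q * (1 + e) * t / (1 - t)) by (unfold y; field; lra).
  assert (0 <= q * (1 + e) * t / (1 - t)) by (apply Rle_mult_inv_pos; [repeat apply Rmult_le_pos; lra | try apply Rmult_lt_0_compat; lra]).
  lra.
Qed.

Lemma yQ q e t : 0 < q -> 0 <= t <= e -> e < 1 ->
  q * (1 + e) / (1 - t) <= q * (1 + e) / (1 - e).
Proof.
  intros Hq Ht He. set (y := q * (1 + e) / (1 - t)). set (Q := q * (1 + e) / (1 - e)).
  assert (H1 : Q - y = q * (1 + e) * (e - t) / ((1 - e) * (1 - t))) by (unfold y, Q; field; lra).
  assert (0 <= q * (1 + e) * (e - t) / ((1 - e) * (1 - t))) by (apply Rle_mult_inv_pos; [repeat apply Rmult_le_pos; lra | try apply Rmult_lt_0_compat; lra]).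
  lra.
Qed.

Ltac rcases :=
  unfold Rmin, Rmax, Rabs in *;
  repeat match goal with
  | |- context [Rle_dec ?a ?b] => destruct (Rle_dec a b)
  | |- context [Rcase_abs ?a] => destruct (Rcase_abs a)
  | H : context [Rle_dec ?a ?b] |- _ => destruct (Rle_dec a b)
  | H : context [Rcase_abs ?a] |- _ => destruct (Rcase_abs a)
  end; lra.

Lemma gen q' q e w : 0 < q -> 0 <= e <= 1 -> 0 <= w <= PI / 2 ->
  (exists x y, delta_nod q' q e w = Fin (Rmin (Rabs (q' - x)) (Rabs (q' - y))) /\
     q <= x <= q * (1 + e) /\ q * (1 + e) <= y /\
     (e < 1 -> y <= q * (1 + e) / (1 - e)))
  \/ (e = 1 /\ delta_nod q' q e w = Fin (Rabs (q' - q))).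
Proof.
  intros Hq He Hw. pose proof (cos_dom w Hw) as Hc.
  assert (Ht : 0 <= e * cos w <= e) by nra.
  destruct (Rle_lt_dec 1 (e * cos w)) as [h|h].
  - right. assert (e = 1) by nra. assert (cos w = 1) by nra. split; [assumption|].
    apply delta_eq1; assumption.
  - left. exists (q * (1 + e) / (1 + e * cos w)), (q * (1 + e) / (1 - e * cos w)).
    split; [apply delta_lt1; lra|].
    split; [apply xbounds; lra|]. split; [apply ybounds; lra|].
    intros He1. apply yQ; lra.
Qed.

Theorem proposition10 (q' qmax q e : R) :
  0 < q' -> 0 < qmax -> 0 < q <= qmax -> 0 <= e <= 1 ->
  is_min_on (fun w => 0 <= w <= PI / 2) (delta_nod q' q e)
    (ER_max (Fin 0) (ER_max (ER_sub_RE q' (Qapo q e)) (Fin (q - q'))))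
  /\
  is_max_on (fun w => 0 <= w <= PI / 2) (delta_nod q' q e)
    (ER_max (ER_min (Fin (q' - q)) (ER_sub_ER (Qapo q e) q'))
            (ER_abs (Fin (q' - q * (1 + e))))).
Proof.
  intros Hq' _ [Hq _] He. pose proof PI_RGT_0 as HPI.
  assert (Hw0 : 0 <= 0 <= PI / 2) by lra.
  assert (Hw1 : 0 <= PI / 2 <= PI / 2) by lra.
  destruct (Rlt_le_dec e 1) as [He1|He1].
  -
    rewrite (Qapo_lt1 q e He1). cbn [ER_max ER_min ER_sub_RE ER_sub_ER ER_abs].
    set (A := q * (1 + e)) in *. set (Q := A / (1 - e)).
    assert (HAQ : A <= Q) by (unfold Q, A; apply (ybounds q e e); lra).
    assert (HqA : q <= A) by (unfold A; nra).
    assert (D0 : delta_nod q' q e 0 = Fin (Rmin (Rabs (q' - q)) (Rabs (q' - Q)))).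
    { rewrite delta_lt1; rewrite cos_0; [|nra].
      replace (q * (1 + e) / (1 + e * 1)) with q by (field; lra).
      replace (1 - e * 1) with (1 - e) by ring. reflexivity. }
    split; split.
    + destruct (Rle_lt_dec q' q) as [h1|h1].
      { exists 0. split; [exact Hw0|]. rewrite D0. f_equal. rcases. }
      destruct (Rle_lt_dec Q q') as [h2|h2].
      { exists 0. split; [exact Hw0|]. rewrite D0. f_equal. rcases. }
      assert (He0 : 0 < e) by (destruct (Req_dec e 0) as [E|E]; [unfold Q, A in h2; rewrite E in h2;
          replace (q * (1 + 0) / (1 - 0)) with q in h2 by field; lra | lra]).
      destruct (Rle_lt_dec q' A) as [h3|h3].
      * set (c := (A - q') / (e * q')).
        assert (Hc : 0 <= c <= 1).
        { unfold c. split.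
          - apply Rle_mult_inv_pos; [lra | nra].
          - apply Rmult_le_reg_r with (e * q'); [nra|].
            unfold Rdiv. rewrite Rmult_assoc, Rinv_l; [|nra]. unfold A. nra. }
        destruct (ex_w c Hc) as [w [Hw Hcw]]. exists w. split; [exact Hw|].
        rewrite delta_lt1; rewrite Hcw.
        2:{ split; [nra|]. unfold c. replace (e * ((A - q') / (e * q'))) with ((A - q')/q') by (field; lra).
            apply Rmult_lt_reg_r with q'; [lra|]. unfold Rdiv. rewrite Rmult_assoc, Rinv_l; [unfold A; nra | lra]. }
        replace (q * (1 + e) / (1 + e * c)) with q'.
        2:{ unfold c. fold A. field. split; [lra|]. split; [lra|].
            replace (e * q' + e * (A - q')) with (e * A) by ring. unfold A. nra. }
        f_equal. rewrite Rminus_diag, Rabs_R0. pose proof (Rabs_pos (q' - q * (1 + e) / (1 - e * c))).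
        rcases.
      * set (c := (q' - A) / (e * q')).
        assert (HQe : Q * (1 - e) = A) by (unfold Q; field; lra).
        assert (Hc : 0 <= c <= 1).
        { unfold c. split.
          - apply Rle_mult_inv_pos; [lra | nra].
          - apply Rmult_le_reg_r with (e * q'); [nra|].
            unfold Rdiv. rewrite Rmult_assoc, Rinv_l; [|nra]. nra. }
        destruct (ex_w c Hc) as [w [Hw Hcw]]. exists w. split; [exact Hw|].
        rewrite delta_lt1; rewrite Hcw.
        2:{ split; [nra|]. nra. }
        replace (q * (1 + e) / (1 - e * c)) with q'.
        2:{ unfold c. fold A. field. split; [lra|]. split; [lra|].
            replace (e * q' - e * (q' - A)) with (e * A) by ring. unfold A. nra. }
        f_equal. rewrite Rminus_diag, Rabs_R0. pose proof (Rabs_pos (q' - q * (1 + e) / (1 + e * c))).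
        rcases.
    + intros w Hw. destruct (gen q' q e w Hq He Hw) as [[x [y [Hd [Hx [Hy HyQ]]]]] | [E _]]; [|lra].
      rewrite Hd. specialize (HyQ He1). fold A Q in Hx, Hy, HyQ. simpl. rcases.
    + destruct (Rle_lt_dec (Rmin (q' - q) (Q - q')) (Rabs (q' - A))) as [h|h].
      * exists (PI / 2). split; [exact Hw1|]. rewrite delta_lt1; rewrite cos_PI2; [|lra].
        replace (q * (1 + e) / (1 + e * 0)) with A by (unfold A; field).
        replace (q * (1 + e) / (1 - e * 0)) with A by (unfold A; field).
        f_equal. rcases.
      * exists 0. split; [exact Hw0|]. rewrite D0. f_equal. pose proof (Rabs_pos (q' - A)). rcases.
    + intros w Hw. destruct (gen q' q e w Hq He Hw) as [[x [y [Hd [Hx [Hy HyQ]]]]] | [E _]]; [|lra].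
      rewrite Hd. specialize (HyQ He1). fold A Q in Hx, Hy, HyQ. simpl. rcases.
  -
    assert (E : e = 1) by lra.
    rewrite (Qapo_eq1 q e E). cbn [ER_max ER_min ER_sub_RE ER_sub_ER ER_abs].
    assert (D0 : delta_nod q' q e 0 = Fin (Rabs (q' - q))) by (apply delta_eq1; [exact E | apply cos_0]).
    subst e.
    split; split.
    + destruct (Rle_lt_dec q' q) as [h1|h1].
      { exists 0. split; [exact Hw0|]. rewrite D0. f_equal. rcases. }
      set (A := q * (1 + 1)).
      destruct (Rle_lt_dec q' A) as [h3|h3].
      * set (c := (A - q') / q').
        assert (Hc : 0 <= c <= 1).
        { unfold c. split.
          - apply Rle_mult_inv_pos; lra.
          - apply Rmult_le_reg_r with q'; [nra|].
            unfold Rdiv. rewrite Rmult_assoc, Rinv_l; [|lra]. unfold A. nra. }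
        destruct (ex_w c Hc) as [w [Hw Hcw]]. exists w. split; [exact Hw|].
        rewrite delta_lt1; rewrite Hcw.
        2:{ split; [nra|]. rewrite Rmult_1_l. unfold c.
            apply Rmult_lt_reg_r with q'; [lra|]. unfold Rdiv. rewrite Rmult_assoc, Rinv_l; unfold A; lra. }
        replace (q * (1 + 1) / (1 + 1 * c)) with q'.
        2:{ unfold c. fold A. field. split; [lra|].
            replace (q' + (A - q')) with A by ring. unfold A. nra. }
        f_equal. rewrite Rminus_diag, Rabs_R0. pose proof (Rabs_pos (q' - q * (1 + 1) / (1 - 1 * c))).
        rcases.
      * set (c := (q' - A) / q').
        assert (Hc : 0 <= c <= 1).
        { unfold c. split.
          - apply Rle_mult_inv_pos; lra.
          - apply Rmult_le_reg_r with q'; [nra|].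
            unfold Rdiv. rewrite Rmult_assoc, Rinv_l; [|lra]. unfold A. nra. }
        destruct (ex_w c Hc) as [w [Hw Hcw]]. exists w. split; [exact Hw|].
        rewrite delta_lt1; rewrite Hcw.
        2:{ split; [nra|]. rewrite Rmult_1_l. unfold c.
            apply Rmult_lt_reg_r with q'; [lra|]. unfold Rdiv. rewrite Rmult_assoc, Rinv_l; unfold A; lra. }
        replace (q * (1 + 1) / (1 - 1 * c)) with q'.
        2:{ unfold c. fold A. field. split; [lra|].
            replace (q' - (q' - A)) with A by ring. unfold A. nra. }
        f_equal. rewrite Rminus_diag, Rabs_R0. pose proof (Rabs_pos (q' - q * (1 + 1) / (1 + 1 * c))).
        rcases.
    + intros w Hw. destruct (gen q' q 1 w Hq He Hw) as [[x [y [Hd [Hx [Hy _]]]]] | [_ Hd]];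
      rewrite Hd; simpl; rcases.
    + destruct (Rle_lt_dec (q' - q) (Rabs (q' - q * (1 + 1)))) as [h|h].
      * exists (PI / 2). split; [exact Hw1|]. rewrite delta_lt1; rewrite cos_PI2; [|lra].
        replace (q * (1 + 1) / (1 + 1 * 0)) with (q * (1 + 1)) by field.
        replace (q * (1 + 1) / (1 - 1 * 0)) with (q * (1 + 1)) by field.
        f_equal. rcases.
      * exists 0. split; [exact Hw0|]. rewrite D0. f_equal. pose proof (Rabs_pos (q' - q * (1 + 1))). rcases.
    + intros w Hw. destruct (gen q' q 1 w Hq He Hw) as [[x [y [Hd [Hx [Hy _]]]]] | [_ Hd]];
      rewrite Hd; simpl; rcases.
Qed.
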